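(* Let $k\ge 1$ and let $r_1,\ldots,r_k$ be $k$ travel requests whose arrivals follow independent Poisson processes with rates $\alpha_1,\ldots,\alpha_k>0$, respectively. Let $\bar t>0$. Then the probability that all $k$ requests have an occurrence within a time interval of length at most $\bar t$, i.e. the probability that $\max\{E_1,\ldots,E_k\}-\min\{E_1,\ldots,E_k\}\le \bar t$ where $E_i\sim\mathrm{Exp}(\alpha_i)$ are the independent times until the first occurrence of request $r_i$, equals $$P_{\bar{t}}(\alpha_{1}, \ldots, \alpha_{k})=\sum_{i=1}^{k} \frac{\alpha_{i}}{\sum_{j=1}^{k} \alpha_{j}} \prod_{\substack{j=1\\ j\neq i}}^{k}\left(1-e^{-\alpha_{j} \bar{t}}\right).$$
   Context: The time until the first occurrence of a Poisson process with rate $\alpha$ is exponentially distributed with parameter $\alpha$. *)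

(* Defs.v *)
From HB Require Import structures.
From mathcomp Require Import all_boot all_order all_algebra.
From mathcomp Require Import all_classical all_reals all_analysis.
From mathcomp Require Export exponential_distribution.
Set Implicit Arguments. Unset Strict Implicit. Unset Printing Implicit Defensive.
Import Order.TTheory GRing.Theory Num.Theory.
Local Open Scope classical_set_scope.
Local Open Scope ring_scope.

Definition mutually_independent_RV {R : realType} {d : measure_display}
  {T : measurableType d} (P : probability T R) (k : nat)
  (X : 'I_k -> {RV P >-> R}) : Prop :=
  forall (J : {set 'I_k}) (A : 'I_k -> set R),
    (forall i, measurable (A i)) ->
    P (\bigcap_(i in [set i | i \in J]) (X i @^-1` A i)) =
    (\prod_(i in J) P (X i @^-1` A i))%E.
Arguments mutually_independent_RV {R d T} P {k} X.

(* Main.v *)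
Require Import Defs.
From HB Require Import structures.
From mathcomp Require Import all_boot all_order all_algebra.
From mathcomp Require Import all_classical all_reals all_analysis.
From mathcomp Require Import exponential_distribution measurable_realfun.
From mathcomp Require Import ring lra.
Import Order.TTheory GRing.Theory Num.Theory.
Import numFieldTopology.Exports.
Local Open Scope classical_set_scope.
Local Open Scope ring_scope.
Section S.
Context {R : realType}.
Notation mu := (@lebesgue_measure R).

Lemma exp_itv_cc (rate a b : R) : 0 <= a -> a < b ->
  exponential_prob rate `[a, b] = (expR (- rate * a) - expR (- rate * b))%:E.
Proof.
move=> a0 ab.
have cexpNM : continuous (fun z : R^o => expR (- rate * z)).
  move=> z; apply: continuous_comp; last exact: continuous_expR.
  by apply: continuousM => //; apply: (@continuousN _ R^o); exact: cst_continuous.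
rewrite /exponential_prob.
rewrite (@continuous_FTC2 _ _ (fun x => - expR (- rate * x))) //.
- by rewrite -EFinB opprK addrC.
- apply: (@continuous_subspaceW R^o _ _ [set` `[0, +oo[%R]).
  + by move=> x /=; rewrite !in_itv/= => /andP[ax _]; rewrite (le_trans a0 ax).
  + exact: within_continuous_exponential_pdf.
- split.
  + by move=> z _; exact: ex_derive.
  + by apply/cvg_at_right_filter; apply: cvgN; exact: cexpNM.
  + by apply/cvg_at_left_filter; apply: cvgN; exact: cexpNM.
- move=> z; rewrite in_itv/= => /andP[az _].
  by apply: derive1_exponential_pdf; rewrite in_itv/= andbT (le_lt_trans a0 az).
Qed.

Lemma exp_itv_co (rate a b : R) : 0 <= a -> a <= b ->
  exponential_prob rate `[a, b[ = (expR (- rate * a) - expR (- rate * b))%:E.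
Proof.
move=> a0; rewrite le_eqVlt => /orP[/eqP<-|ab].
  rewrite subrr set_itv_ge; last by rewrite bnd_simp ltxx.
  by rewrite /exponential_prob integral_set0.
rewrite /exponential_prob integral_itv_bndo_bndc; first exact: exp_itv_cc.
apply/measurable_EFinP; apply: measurable_funTS.
exact: measurable_exponential_pdf.
Qed.

Lemma exp_neg (rate : R) : exponential_prob rate `]-oo, 0[ = 0%E.
Proof.
rewrite /exponential_prob integral0_eq // => x; rewrite /= in_itv /= => x0.
by rewrite lt0_exponential_pdf.
Qed.
End S.

Lemma rect_prob {R : realType} {d : measure_display} {T : measurableType d}
  (P : probability T R) k (E : 'I_k -> {RV P >-> R}) (alpha : 'I_k -> R)
  (hind : mutually_independent_RV P E)
  (hexp : forall i (A : set R), measurable A ->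
     distribution P (E i) A = exponential_prob (alpha i) A)
  (a b : 'I_k -> R) :
  (forall j, 0 <= a j) -> (forall j, a j <= b j) ->
  P (\bigcap_(j in [set j | j \in [set: 'I_k]%SET]) E j @^-1` `[a j, b j[) =
  (\prod_(j < k) (expR (- alpha j * a j) - expR (- alpha j * b j)))%:E.
Proof.
move=> a0 ab.
rewrite hind; last by move=> i; exact: measurable_itv.
rewrite -prodEFin.
transitivity (\prod_(i < k) P (E i @^-1` `[a i, b i[))%E.
  by apply: eq_bigl => i; rewrite inE.
apply: eq_bigr => j _.
have -> : P (E j @^-1` `[a j, b j[) = distribution P (E j) `[a j, b j[ by [].
by rewrite hexp; [exact: exp_itv_co | exact: measurable_itv].
Qed.
Lemma geo_eseries {R : realType} (q c : R) : 0 <= q -> q < 1 ->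
  (\sum_(n <oo) ((c * q ^+ n)%:E) = (c / (1 - q))%:E)%E.
Proof.
move=> q0 q1; apply: cvg_lim => //.
apply: cvg_EFin.
  by apply: nearW => /= x; rewrite sumEFin.
rewrite [X in X @ _ --> _](_ : _ = series (geometric c q)); last first.
  by apply/funext => x; rewrite /= sumEFin.
by apply: cvg_geometric_series; rewrite ger0_norm.
Qed.

Lemma prod_shift {R : realType} k (alpha : 'I_k -> R) (n : nat) (h : R) (c d : 'I_k -> R) :
  \prod_(j < k) (expR (- alpha j * (n%:R * h + c j)) - expR (- alpha j * (n%:R * h + d j))) =
  expR (- (\sum_(j < k) alpha j) * h) ^+ n *
  \prod_(j < k) (expR (- alpha j * c j) - expR (- alpha j * d j)).
Proof.
transitivity (\prod_(j < k) (expR (- alpha j * h) ^+ n *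
   (expR (- alpha j * c j) - expR (- alpha j * d j)))).
  apply: eq_bigr => j _.
  rewrite (_ : expR (- alpha j * h) ^+ n = expR (- alpha j * (n%:R * h))); last first.
    by rewrite -expRM_natl; congr expR; ring.
  by rewrite !mulrDr !expRD; ring.

rewrite big_split /= prodrXl; congr (_ ^+ _ * _).
rewrite -expR_sum; congr expR.
by rewrite mulNr mulr_suml -sumrN; apply: eq_bigr => j _; rewrite mulNr.
Qed.

Lemma rect_measurable {R : realType} {d : measure_display} {T : measurableType d}
  (P : probability T R) k (E : 'I_k -> {RV P >-> R}) (a b : 'I_k -> R) :
  measurable (\bigcap_(j in [set j | j \in [set: 'I_k]%SET]) E j @^-1` `[a j, b j[).
Proof.
apply: fin_bigcap_measurable; first exact: finite_finset.
by move=> j _; apply: measurable_funPTI; exact: measurable_itv.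
Qed.

Lemma in_bigsetU {T : Type} k (F : 'I_k -> set T) w :
  (\big[setU/set0]_(i < k) F i) w <-> exists i, F i w.
Proof.
split.
  elim/big_rec: _ => [//|i X _ IH [Fi|/IH//]]; by exists i.
by move=> [i Fi]; rewrite (bigD1 i) //=; left.
Qed.

Lemma le_bigsetU {R : realType} {d : measure_display} {T : measurableType d}
  (P : probability T R) k (F : 'I_k -> set T) :
  (forall i, measurable (F i)) ->
  measurable (\big[setU/set0]_(i < k) F i) /\
  (P (\big[setU/set0]_(i < k) F i) <= \sum_(i < k) P (F i))%E.
Proof.
move=> mF.
elim/big_ind2: _ => //.
- by split => //; rewrite measure0.
- move=> X a Y b [mX Xa] [mY Yb]; split; first exact: measurableU.
  by apply: (le_trans (measureU2 _ mX mY)); exact: leeD.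
Qed.

Lemma union_prob {R : realType} {d : measure_display} {T : measurableType d}
  (P : probability T R) k (E : 'I_k -> {RV P >-> R}) (alpha : 'I_k -> R)
  (halpha : forall i, 0 < alpha i) (hk : (0 < k)%N)
  (hind : mutually_independent_RV P E)
  (hexp : forall i (A : set R), measurable A ->
     distribution P (E i) A = exponential_prob (alpha i) A)
  (h : R) (h0 : 0 < h) (i : 'I_k) (c e : 'I_k -> R) :
  c i = 0 -> e i = h -> (forall j, 0 <= c j) -> (forall j, c j <= e j) ->
  P (\bigcup_n \bigcap_(j in [set j | j \in [set: 'I_k]%SET])
       E j @^-1` `[n%:R * h + c j, n%:R * h + e j[) =
  ((\prod_(j < k) (expR (- alpha j * c j) - expR (- alpha j * e j))) /
     (1 - expR (- (\sum_(j < k) alpha j) * h)))%:E.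
Proof.
move=> ci di c0 cd.
have S0 : 0 < \sum_(j < k) alpha j.
  rewrite (bigD1 (Ordinal hk)) //=; apply: (lt_le_trans (halpha (Ordinal hk))).
  rewrite lerDl; apply: sumr_ge0 => j _; exact: ltW.
rewrite measure_semi_bigcup.
- rewrite (eq_eseriesr (g := fun n => ((\prod_(j < k) (expR (- alpha j * c j) - expR (- alpha j * e j))) *
      expR (- (\sum_(j < k) alpha j) * h) ^+ n)%:E)); last first.
    move=> n _.
    have hab1 : forall j, 0 <= n%:R * h + c j.
      by move=> j; apply: addr_ge0 => //; apply: mulr_ge0 => //; exact: ltW.
    have hab2 : forall j, n%:R * h + c j <= n%:R * h + e j by move=> j; rewrite lerD2l.
    apply: (eq_trans (@rect_prob R d T P k E alpha hind hexp (fun j => n%:R * h + c j) (fun j => n%:R * h + e j) hab1 hab2)).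
    by rewrite /= prod_shift mulrC.
  apply: geo_eseries; first exact: expR_ge0.
  by rewrite expR_lt1 mulNr oppr_lt0 mulr_gt0.
- by move=> n; exact: rect_measurable.
- move=> n m _ _ [w [Hn Hm]].
  have := Hn i; rewrite /= inE => /(_ isT); rewrite /= in_itv /= ci di addr0 => /andP[n1 n2].
  have := Hm i; rewrite /= inE => /(_ isT); rewrite /= in_itv /= ci di addr0 => /andP[m1 m2].
  have nm : (n%:R : R) < m%:R + 1.
    by rewrite -(ltr_pM2r h0) mulrDl mul1r; apply: (le_lt_trans n1 m2).
  have mn : (m%:R : R) < n%:R + 1.
    by rewrite -(ltr_pM2r h0) mulrDl mul1r; apply: (le_lt_trans m1 n2).
  rewrite natr1 ltr_nat ltnS in nm; rewrite natr1 ltr_nat ltnS in mn.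
  by apply/eqP; rewrite eqn_leq nm mn.
- by apply: bigcup_measurable => n _; exact: rect_measurable.
Qed.
Lemma squeeze0 {R : realType} (p t : R) (f g : R -> R) : 0 < t ->
  continuous f -> continuous g ->
  (forall h, 0 < h -> h < t -> f h <= p /\ p <= g h) -> f 0 <= p /\ p <= g 0.
Proof.
move=> t0 cf cg H; split.
- apply: (cvgr_to_le (cvg_at_right_filter (cf 0))).
  near=> h.
  have h0 : 0 < h by near: h; exact: nbhs_right_gt.
  have ht : h < t by near: h; exact: nbhs_right_lt.
  by case: (H h h0 ht).
- apply: (cvgr_to_ge (cvg_at_right_filter (cg 0))).
  near=> h.
  have h0 : 0 < h by near: h; exact: nbhs_right_gt.
  have ht : h < t by near: h; exact: nbhs_right_lt.
  by case: (H h h0 ht).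
Unshelve. all: by end_near. Qed.

Lemma bigmax_ge {R : realType} k (F : 'I_k -> R) x i :
  F i <= \big[Num.max/x]_(j < k) F j.
Proof.
by rewrite (bigD1 i) //= le_max lexx.
Qed.

Lemma bigmin_le {R : realType} k (F : 'I_k -> R) x i :
  \big[Num.min/x]_(j < k) F j <= F i.
Proof.
by rewrite (bigD1 i) //= ge_min lexx.
Qed.

Lemma bigmax_le' {R : realType} k (F : 'I_k -> R) x c :
  x <= c -> (forall i, F i <= c) -> \big[Num.max/x]_(j < k) F j <= c.
Proof.
move=> xc H; elim/big_ind: _ => // a b ha hb; by rewrite ge_max ha hb.
Qed.

Lemma bigmin_ge' {R : realType} k (F : 'I_k -> R) x c :
  c <= x -> (forall i, c <= F i) -> c <= \big[Num.min/x]_(j < k) F j.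
Proof.
move=> xc H; elim/big_ind: _ => // a b ha hb; by rewrite le_min ha hb.
Qed.

Lemma bigmin_ex {R : realType} k (F : 'I_k -> R) i0 :
  exists i, \big[Num.min/F i0]_(j < k) F j = F i.
Proof.
elim/big_ind: _.
- by exists i0.
- move=> a b [i ->] [j ->]; rewrite /Num.min; case: ifP => _; by [exists i|exists j].
- by move=> i _; exists i.
Qed.
Lemma ratio_bounds {R : realType} (a S h : R) : 0 < a -> 0 < S -> 0 < h ->
  a / S * expR (- a * h) <= (1 - expR (- a * h)) / (1 - expR (- S * h)) /\
  (1 - expR (- a * h)) / (1 - expR (- S * h)) <= a / S * expR (S * h).
Proof.
move=> a0 S0 h0.
have qlt1 : expR (- S * h) < 1 by rewrite expR_lt1 mulNr oppr_lt0 mulr_gt0.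
have d0 : 0 < 1 - expR (- S * h) by rewrite subr_gt0.
have key (u : R) : u * expR (- u) <= 1 - expR (- u) /\ 1 - expR (- u) <= u.
  have H := expR_ge1Dx u; have H2 := expR_ge1Dx (- u).
  have E : expR u * expR (- u) = 1 by rewrite -expRD subrr expR0.
  have P := expR_gt0 (- u).
  split; nra.
have XS : a / S * S = a by rewrite mulfVK // gt_eqF.
have X0 : 0 <= a / S by rewrite divr_ge0 // ltW.
split.
- rewrite ler_pdivlMr //.
  have [k1 _] := key (a * h).
  have [_ k2] := key (S * h).
  rewrite !mulNr in k1 k2 *.
  set E := expR (- (a * h)) in k1 *; set q := expR (- (S * h)) in k2 d0 *.
  have EX : 0 <= a / S * E by rewrite mulr_ge0 // expR_ge0.
  apply: (le_trans (ler_wpM2l EX k2)); apply: le_trans k1.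
  by rewrite -[in X in _ <= X]XS; rewrite le_eqVlt; apply/orP; left; apply/eqP; ring.
- rewrite ler_pdivrMr //.
  have [_ k1] := key (a * h).
  have [k2 _] := key (S * h).
  rewrite !mulNr in k1 k2 *.
  set E := expR (- (a * h)) in k1 *; set q := expR (- (S * h)) in k2 d0 *.
  have F : expR (S * h) * q = 1 by rewrite /q -expRD subrr expR0.
  apply: (le_trans k1).
  have EX : 0 <= a / S * expR (S * h) by rewrite mulr_ge0 // expR_ge0.
  apply: le_trans (ler_wpM2l EX k2).
  rewrite -[in X in X <= _]XS.
  have -> : a / S * expR (S * h) * (S * h * q) = a / S * S * h * (expR (S * h) * q) by ring.
  by rewrite F mulr1.
Qed.

Lemma cont_lin {R : realType} (c d : R) : continuous (fun h : R => expR (c * h + d)).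
Proof.
move=> z; apply: continuous_comp; last exact: continuous_expR.
apply: (@continuousD _ R^o); last exact: cst_continuous.
by apply: continuousM; [exact: cst_continuous | exact: cvg_id].
Qed.

Lemma final_real {R : realType} k (alpha : 'I_k -> R) (halpha : forall i, 0 < alpha i)
  (hk : (0 < k)%N) (t : R) (t0 : 0 < t) (p : R) :
  (forall h, 0 < h -> h < t ->
   \sum_(i < k) ((1 - expR (- alpha i * h)) / (1 - expR (- (\sum_(j < k) alpha j) * h)) *
       \prod_(j < k | j != i) (expR (- alpha j * h) - expR (- alpha j * t))) <= p /\
   p <= \sum_(i < k) ((1 - expR (- alpha i * h)) / (1 - expR (- (\sum_(j < k) alpha j) * h)) *
       \prod_(j < k | j != i) (1 - expR (- alpha j * (h + t))))) ->
  p = \sum_(i < k) (alpha i / \sum_(j < k) alpha j) *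
     \prod_(j < k | j != i) (1 - expR (- alpha j * t)).
Proof.
move=> H.
set S := \sum_(j < k) alpha j in H *.
have S0 : 0 < S.
  rewrite /S (bigD1 (Ordinal hk)) //=; apply: (lt_le_trans (halpha (Ordinal hk))).
  rewrite lerDl; apply: sumr_ge0 => i _; exact: ltW.
pose f h := \sum_(i < k) (alpha i / S * expR (- alpha i * h + 0) *
     \prod_(j < k | j != i) (expR (- alpha j * h + 0) - expR (0 * h + - alpha j * t))).
pose g h := \sum_(i < k) (alpha i / S * expR (S * h + 0) *
     \prod_(j < k | j != i) (expR (0 * h + 0) - expR (- alpha j * h + - alpha j * t))).
have cf : continuous f.
  apply: (continuous_big (op := +%R)); first exact: add_continuous.
  move=> i _ x.
  apply: (@continuousM R R^o (fun h => alpha i / S * expR (- alpha i * h + 0))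
     (fun h => \prod_(j < k | j != i) (expR (- alpha j * h + 0) - expR (0 * h + - alpha j * t)))).
    apply: (@continuousM R R^o (fun h => alpha i / S) (fun h => expR (- alpha i * h + 0))).
  - exact: cst_continuous.
  - exact: cont_lin.
  move: x; apply: (@continuous_big R^o 'I_k *%R 1 (fun j => j != i) mul_continuous R^o (index_enum _)
     (fun j h => expR (- alpha j * h + 0) - expR (0 * h + - alpha j * t))).
  move=> j _ x; apply: (@continuousB R R^o R^o (fun h => expR (- alpha j * h + 0)) (fun h => expR (0 * h + - alpha j * t))); exact: cont_lin.
have cg : continuous g.
  apply: (continuous_big (op := +%R)); first exact: add_continuous.
  move=> i _ x.
  apply: (@continuousM R R^o (fun h => alpha i / S * expR (S * h + 0))
     (fun h => \prod_(j < k | j != i) (expR (0 * h + 0) - expR (- alpha j * h + - alpha j * t)))).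
    apply: (@continuousM R R^o (fun h => alpha i / S) (fun h => expR (S * h + 0))).
  - exact: cst_continuous.
  - exact: cont_lin.
  move: x; apply: (@continuous_big R^o 'I_k *%R 1 (fun j => j != i) mul_continuous R^o (index_enum _)
     (fun j h => expR (0 * h + 0) - expR (- alpha j * h + - alpha j * t))).
  move=> j _ x; apply: (@continuousB R R^o R^o (fun h => expR (0 * h + 0)) (fun h => expR (- alpha j * h + - alpha j * t))); exact: cont_lin.
have := @squeeze0 R p t f g t0 cf cg.
have f0 : f 0 = \sum_(i < k) (alpha i / S) * \prod_(j < k | j != i) (1 - expR (- alpha j * t)).
  rewrite /f; apply: eq_bigr => i _.
  rewrite ?mulr0 ?addr0 ?mul0r ?add0r ?expR0 ?mulr1; congr (_ * _).
  by apply: eq_bigr => j _; rewrite ?mulr0 ?addr0 ?mul0r ?add0r ?expR0 ?mulr1.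
have g0 : g 0 = \sum_(i < k) (alpha i / S) * \prod_(j < k | j != i) (1 - expR (- alpha j * t)).
  rewrite /g; apply: eq_bigr => i _.
  rewrite ?mulr0 ?addr0 ?mul0r ?add0r ?expR0 ?mulr1; congr (_ * _).
  by apply: eq_bigr => j _; rewrite ?mulr0 ?addr0 ?mul0r ?add0r ?expR0 ?mulr1.
rewrite f0 g0 => /(_ _) [].
  move=> h h0 ht; have [H1 H2] := H h h0 ht; split.
  - apply: le_trans H1; apply: ler_sum => i _.
    rewrite addr0; under eq_bigr do rewrite addr0 mul0r add0r.
    have [r1 _] := @ratio_bounds R (alpha i) S h (halpha i) S0 h0.
    apply: ler_wpM2r => //.
    apply: prodr_ge0 => j _; rewrite subr_ge0 ler_expR !mulNr lerN2.
    by rewrite ler_pM2l // ltW.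
  - apply: le_trans H2 _; apply: ler_sum => i _.
    rewrite [S * h + 0]addr0 (_ : \prod_(j < k | j != i) (expR (0 * h + 0) - expR (- alpha j * h + - alpha j * t)) = \prod_(j < k | j != i) (1 - expR (- alpha j * (h + t)))); last first.
      by apply: eq_bigr => j _; rewrite mul0r add0r expR0 mulrDr.
    have [_ r2] := @ratio_bounds R (alpha i) S h (halpha i) S0 h0.
    apply: ler_wpM2r => //.
    apply: prodr_ge0 => j _; rewrite subr_ge0; apply: ltW; rewrite expR_lt1 mulNr oppr_lt0.
    by apply: mulr_gt0; [exact: halpha | exact: addr_gt0].
by move=> a b; apply/le_anti; rewrite a b.
Qed.
Theorem lemma1 (R : realType) (d : measure_display) (T : measurableType d)
  (P : probability T R) (k : nat) (hk : (0 < k)%N)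
  (alpha : 'I_k -> R) (halpha : forall i, 0 < alpha i)
  (tbar : R) (htbar : 0 < tbar)
  (E : 'I_k -> {RV P >-> R})
  (hind : mutually_independent_RV P E)
  (hexp : forall i (A : set R), measurable A ->
     distribution P (E i) A = exponential_prob (alpha i) A) :
  P [set w | \big[Num.max/E (Ordinal hk) w]_(i < k) E i w
             - \big[Num.min/E (Ordinal hk) w]_(i < k) E i w <= tbar] =
  (\sum_(i < k) (alpha i / \sum_(j < k) alpha j) *
     \prod_(j < k | j != i) (1 - expR (- alpha j * tbar)))%:E.
Proof.
set A := [set w | _].
have mbig : forall (op : R -> R -> R), (forall f g : T -> R, measurable_fun setT f ->
    measurable_fun setT g -> measurable_fun setT (fun w => op (f w) (g w))) ->
  forall r, measurable_fun setT (fun w => \big[op/E (Ordinal hk) w]_(i <- r) E i w).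
  move=> op mop; elim => [|i r IH].
    by under eq_fun do rewrite big_nil; exact: measurable_funP.
  under eq_fun do rewrite big_cons.
  by apply: mop => //; exact: measurable_funP.
have mA : measurable A.
  have mD : measurable_fun setT (fun w => \big[Num.max/E (Ordinal hk) w]_(i < k) E i w
             - \big[Num.min/E (Ordinal hk) w]_(i < k) E i w).
    apply: measurable_funB.
      by apply: mbig => f g mf mg; exact: (measurable_maxr mf mg).
    by apply: mbig => f g mf mg; exact: (measurable_minr mf mg).
  have := mD measurableT _ (measurable_itv `]-oo, tbar]).
  rewrite setTI; congr measurable; apply/seteqP; split => w; by rewrite /= in_itv.
have PAfin : P A = (fine (P A))%:E.
  by rewrite fineK // ge0_fin_numE // (le_lt_trans (probability_le1 P mA)) // ltey.
rewrite PAfin; congr EFin; apply: final_real => // h h0 ht.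
have q1 : 0 < 1 - expR (- (\sum_(j < k) alpha j) * h).
  rewrite subr_gt0 expR_lt1 mulNr oppr_lt0 mulr_gt0 //.
  rewrite (bigD1 (Ordinal hk)) //=; apply: (lt_le_trans (halpha (Ordinal hk))).
  rewrite lerDl; apply: sumr_ge0 => j _; exact: ltW.
split.
-
  pose cL (i j : 'I_k) : R := if j == i then 0 else h.
  pose eL (i j : 'I_k) : R := if j == i then h else tbar.
  pose BL i := \bigcup_n \bigcap_(j in [set j | j \in [set: 'I_k]%SET])
       E j @^-1` `[n%:R * h + cL i j, n%:R * h + eL i j[.
  have cL0 i j : 0 <= cL i j by rewrite /cL; case: ifP => // _; exact: ltW.
  have cLeL i j : cL i j <= eL i j.
    by rewrite /cL /eL; case: ifP => _; [exact: ltW | exact: ltW].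
  have PBL i : P (BL i) = ((\prod_(j < k) (expR (- alpha j * cL i j) - expR (- alpha j * eL i j))) /
     (1 - expR (- (\sum_(j < k) alpha j) * h)))%:E.
    apply: (@union_prob R d T P k E alpha halpha hk hind hexp h h0 i (cL i) (eL i)) => //.
    + by rewrite /cL eqxx.
    + by rewrite /eL eqxx.
  have mBL i : measurable (BL i).
    by apply: bigcup_measurable => n _; exact: rect_measurable.
  have BLA : \big[setU/set0]_(i < k) BL i `<=` A.
    move=> w /in_bigsetU [i [n _ RLw]].
    have Hj j : n%:R * h + cL i j <= E j w < n%:R * h + eL i j.
      by have := RLw j; rewrite /= inE => /(_ isT); rewrite /= in_itv.
    rewrite /A /=.
    have h1 : \big[Num.max/E (Ordinal hk) w]_(i0 < k) E i0 w <= n%:R * h + tbar.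
      have Hb j : E j w <= n%:R * h + tbar.
        have /andP[_ /ltW] := Hj j; move/le_trans; apply.
        by rewrite lerD2l /eL; case: ifP => _ //; exact: ltW.
      by apply: bigmax_le'.
    have h2 : n%:R * h <= \big[Num.min/E (Ordinal hk) w]_(i0 < k) E i0 w.
      have Hb j : n%:R * h <= E j w.
        have /andP[+ _] := Hj j; apply: le_trans.
        by rewrite lerDl.
      by apply: bigmin_ge'.
    lra.
  have trivBL : trivIset setT BL.
    move=> i i' _ _ [w [[n _ Hn] [m _ Hm]]].
    case: (eqVneq i i') => // ii'; exfalso.
    have Hn' j : n%:R * h + cL i j <= E j w < n%:R * h + eL i j.
      by have := Hn j; rewrite /= inE => /(_ isT); rewrite /= in_itv.
    have Hm' j : m%:R * h + cL i' j <= E j w < m%:R * h + eL i' j.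
      by have := Hm j; rewrite /= inE => /(_ isT); rewrite /= in_itv.
    have := Hn' i; have := Hn' i'; have := Hm' i; have := Hm' i'.
    rewrite /cL /eL !eqxx (negPf ii') eq_sym (negPf ii').
    move=> /andP[a1 a2] /andP[b1 b2] /andP[c1 c2] /andP[d1 d2].
    lra.
  have PU : P (\big[setU/set0]_(i < k) BL i) = \sum_(i < k) P (BL i).
    by apply: measure_bigsetU_ord.
  rewrite -lee_fin -PAfin.
  apply: (@le_trans _ _ (P (\big[setU/set0]_(i < k) BL i))); last first.
    apply: le_measure => //; rewrite inE //.
    by apply: bigsetU_measurable => i _.
  rewrite PU -sumEFin le_eqVlt; apply/orP; left; apply/eqP; apply: eq_bigr => i _.
  rewrite PBL; congr EFin.
  rewrite [\prod_(j < k) _](bigD1 i) //= /cL /eL eqxx mulr0 expR0 [RHS]mulrAC; congr (_ * _).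
  by apply: eq_bigr => j /negPf ji; rewrite ji.
-
  pose cU (i j : 'I_k) : R := 0.
  pose eU (i j : 'I_k) : R := if j == i then h else h + tbar.
  pose BU i := \bigcup_n \bigcap_(j in [set j | j \in [set: 'I_k]%SET])
       E j @^-1` `[n%:R * h + cU i j, n%:R * h + eU i j[.
  have cUeU i j : cU i j <= eU i j.
    by rewrite /cU /eU; case: ifP => _; [exact: ltW | apply: ltW; exact: addr_gt0].
  have PBU i : P (BU i) = ((\prod_(j < k) (expR (- alpha j * cU i j) - expR (- alpha j * eU i j))) /
     (1 - expR (- (\sum_(j < k) alpha j) * h)))%:E.
    apply: (@union_prob R d T P k E alpha halpha hk hind hexp h h0 i (cU i) (eU i)) => //.
    by rewrite /eU eqxx.
  have mBU i : measurable (BU i).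
    by apply: bigcup_measurable => n _; exact: rect_measurable.
  pose N := \big[setU/set0]_(j < k) (E j @^-1` `]-oo, 0[).
  have [mN PN] := @le_bigsetU R d T P k (fun j => E j @^-1` `]-oo, 0[)
     (fun j => measurable_funPTI (E j) (measurable_itv _)).
  have PN0 : (P N <= 0)%E.
    apply: (le_trans PN); rewrite big1 // => j _.
    have -> : P (E j @^-1` `]-oo, 0[) = distribution P (E j) `]-oo, 0[ by [].
    by rewrite hexp; [exact: exp_neg | exact: measurable_itv].
  have [mBUU PBUU] := @le_bigsetU R d T P k BU mBU.
  have cover : A `<=` N `|` \big[setU/set0]_(i < k) BU i.
    move=> w Aw.
    case: (pselect (exists j, E j w < 0)) => [[j Ej]|nneg].
      by left; apply/in_bigsetU; exists j; rewrite /= in_itv /= Ej.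
    right.
    have E0 j : 0 <= E j w.
      by rewrite leNgt; apply/negP => ?; apply: nneg; exists j.
    have [i Hi] := @bigmin_ex R k (fun j => E j w) (Ordinal hk).
    have x0 : 0 <= E i w / h by rewrite divr_ge0 // ltW.
    have /andP[n1 n2] := truncn_itv x0.
    set n := Num.truncn (E i w / h) in n1 n2.
    rewrite ler_pdivlMr // in n1; rewrite ltr_pdivrMr // -natr1 mulrDl mul1r in n2.
    apply/in_bigsetU; exists i; exists n => //.
    move=> j _; rewrite /= in_itv /= /cU addr0.
    have Hmin : E i w <= E j w by rewrite -Hi; exact: bigmin_le.
    have Hmax : E j w <= E i w + tbar.
      have := @bigmax_ge R k (fun j => E j w) (E (Ordinal hk) w) j.
      rewrite /A /= Hi in Aw; move=> Hb; lra.
    rewrite (le_trans n1 Hmin) /= /eU; case: ifP => [/eqP -> //|_]; lra.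
  rewrite -lee_fin -PAfin.
  apply: (le_trans (le_measure _ _ _ cover)); rewrite ?inE //; first exact: measurableU.
  apply: (le_trans (measureU2 _ mN mBUU)).
  apply: (le_trans (leeD PN0 PBUU)); rewrite add0e.
  rewrite -sumEFin le_eqVlt; apply/orP; left; apply/eqP; apply: eq_bigr => i _.
  rewrite PBU; congr EFin.
  rewrite [\prod_(j < k) _](bigD1 i) //= /cU /eU eqxx mulr0 expR0 [RHS]mulrAC; congr (_ * _).
  by congr (_ * _); apply: eq_bigr => j /negPf ji; rewrite ji mulr0 expR0 mulrDr.
Qed.
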